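(* Let $f:X\to Y$ be a function between topological spaces, where $\gamma$ is a regular operation. Then $f$ is $\gamma$-semi-continuous if and only if for each $x\in X$ and each $\gamma$-open set $B\subseteq Y$ containing $f(x)$, there exists a $\gamma^{*}$-semi-open set $A\subseteq X$ such that $x\in A$ and $f(A)\subseteq B$.
   Context: Each of the spaces $X$, $Y$ carries an operation, both denoted $\gamma$: a map $V\mapsto V^\gamma$ from open sets to subsets with $V\subseteq V^\gamma$. In a space $Z$, for $A\subseteq Z$, $int_\gamma(A)=\{x\in A: \text{there is an open } N \text{ with } x\in N,\ N^\gamma\subseteq A\}$; $A$ is $\gamma$-open iff $A=int_\gamma(A)$. $cl_\gamma(A)$ is the set of $x\in Z$ such that $U^\gamma\cap A\neq\emptyset$ for every open $U\ni x$. $A$ is $\gamma^{*}$-semi-open if there is a $\gamma$-open $O$ with $O\subseteq A\subseteq cl_\gamma(O)$. $f$ is $\gamma$-semi-continuous if $f^{-1}(B)$ is $\gamma^{*}$-semi-open in $X$ for every $\gamma$-open $B$ in $Y$. $\gamma$ is regular if for every point $x$ and open neighbourhoods $U,V$ of $x$ there is an open neighbourhood $W$ of $x$ with $W^\gamma\subseteq U^\gamma\cap V^\gamma$. *)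

(* Defs.v *)
From mathcomp Require Import all_boot all_order.
From mathcomp Require Import all_classical topology.
Set Implicit Arguments. Unset Strict Implicit. Unset Printing Implicit Defensive.
Local Open Scope classical_set_scope.

Section GammaDefs.
Context {T : topologicalType}.
Implicit Types (gam : set T -> set T) (A : set T).

(* gam is an operation: V ⊆ V^gam for every open V (only values on open sets matter) *)
Definition is_operation gam := forall V : set T, open V -> V `<=` gam V.

Definition regular_op gam := forall (x : T) (U V : set T),
  open U -> U x -> open V -> V x ->
  exists W : set T, [/\ open W, W x & gam W `<=` gam U `&` gam V].

Definition int_gam gam A : set T :=
  [set x | A x /\ exists N : set T, [/\ open N, N x & gam N `<=` A]].

Definition gamma_open gam A := A = int_gam gam A.

Definition cl_gam gam A : set T :=
  [set x | forall U : set T, open U -> U x -> gam U `&` A !=set0].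

Definition gamma_star_semi_open gam A :=
  exists O : set T, [/\ gamma_open gam O, O `<=` A & A `<=` cl_gam gam O].

End GammaDefs.

Definition gamma_semi_continuous {X Y : topologicalType}
  (gX : set X -> set X) (gY : set Y -> set Y) (f : X -> Y) :=
  forall B : set Y, gamma_open gY B -> gamma_star_semi_open gX (f @^-1` B).

(* Main.v *)
Require Import Defs.
From mathcomp Require Import all_boot all_order.
From mathcomp Require Import all_classical topology.
Local Open Scope classical_set_scope.

Theorem theorem4p2 (X Y : topologicalType)
  (gX : set X -> set X) (gY : set Y -> set Y)
  (opX : is_operation gX) (opY : is_operation gY)
  (regX : regular_op gX) (regY : regular_op gY)
  (f : X -> Y) :
  gamma_semi_continuous gX gY f <->
  (forall (x : X) (B : set Y), gamma_open gY B -> B (f x) ->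
     exists A : set X, [/\ gamma_star_semi_open gX A, A x & f @` A `<=` B]).
Proof.
split.
  move=> H x B gB Bx; exists (f @^-1` B); split => //; first exact: H.
  by move=> y [z zB <-].
move=> H B gB.
pose O := [set z | exists O' : set X, [/\ gamma_open gX O', O' `<=` f @^-1` B & O' z]].
exists O; split.
- apply/seteqP; split.
    move=> z [O' [gO' sO' O'z]]; split; first by exists O'.
    have : int_gam gX O' z by rewrite -gO'.
    move=> [_ [N [oN Nz gN]]]; exists N; split => //.
    by move=> w /gN w'; exists O'.
  by move=> z [].
- by move=> z [O' [_ sO' O'z]]; apply: sO'.
- move=> x Bx.
  have [A [[OA [gOA sOA sA]] Ax fA]] := H x B gB Bx.
  move=> U oU Ux.
  have [w [gw OAw]] := sA x Ax U oU Ux.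
  exists w; split => //; exists OA; split => //.
  by move=> z /sOA Az; apply: fA; exists z.
Qed.
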